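(* Let $(\Gamma,M)$ be a three-node E-GCM graph in which every pair of distinct nodes is adjacent (a triangle) and every adjacency is odd, i.e. $m_{ij}$ is odd for all $i\ne j$. Then $(\Gamma,M)$ is not admissible.
   Context: E-GCM $M=(M_{ij})_{i,j\in I_n}$: real, $M_{ii}=2$, $M_{ij}\le0$ ($i\ne j$), $M_{ij}\ne0\iff M_{ji}\ne0$, nonzero $M_{ij}M_{ji}$ either $\ge4$ or $=4\cos^2(\pi/m)$ with $m\ge3$ integer; nodes $\gamma_i$ adjacent iff $M_{ij}\ne 0$. For $i\ne j$, $m_{ij}=k$ if $M_{ij}M_{ji}=4\cos^2(\pi/k)$ for an integer $k\ge2$, and $m_{ij}=\infty$ if $M_{ij}M_{ji}\ge4$. Positions $\lambda\in\mathbb{R}^n$; firing $\gamma_i$ (allowed iff $\lambda_i>0$) replaces $\lambda_j$ by $\lambda_j-M_{ij}\lambda_i$. Numbers game: fire nodes with positive population while any exist; a game sequence is convergent if finite. A connected E-GCM graph is admissible if some nonzero position with all $\lambda_i\ge 0$ has a convergent game sequence. *)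

(* Defs.v *)
From Stdlib Require Import Reals Lra List Arith.
Open Scope R_scope.

(* An E-GCM on n nodes: M i j for i, j < n (values outside are irrelevant). *)
Definition EGCM (n : nat) (M : nat -> nat -> R) : Prop :=
  (forall i, (i < n)%nat -> M i i = 2) /\
  (forall i j, (i < n)%nat -> (j < n)%nat -> i <> j -> M i j <= 0) /\
  (forall i j, (i < n)%nat -> (j < n)%nat -> (M i j <> 0 <-> M j i <> 0)) /\
  (forall i j, (i < n)%nat -> (j < n)%nat -> i <> j -> M i j <> 0 ->
     M i j * M j i >= 4 \/
     exists m : nat, (3 <= m)%nat /\ M i j * M j i = 4 * (cos (PI / INR m))^2).

Definition adjacent (M : nat -> nat -> R) (i j : nat) : Prop := M i j <> 0.

(* m_ij = k (k >= 2 an integer) iff M_ij M_ji = 4 cos^2(pi/k) *)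
Definition m_eq (M : nat -> nat -> R) (i j k : nat) : Prop :=
  (2 <= k)%nat /\ M i j * M j i = 4 * (cos (PI / INR k))^2.

Definition m_odd (M : nat -> nat -> R) (i j : nat) : Prop :=
  exists k : nat, m_eq M i j k /\ Nat.Odd k.

Definition fire (M : nat -> nat -> R) (i : nat) (lam : nat -> R) : nat -> R :=
  fun j => lam j - M i j * lam i.

Fixpoint legal_play (n : nat) (M : nat -> nat -> R) (lam : nat -> R)
         (s : list nat) : Prop :=
  match s with
  | nil => True
  | i :: s' => (i < n)%nat /\ 0 < lam i /\ legal_play n M (fire M i lam) s'
  end.

Fixpoint play (M : nat -> nat -> R) (lam : nat -> R) (s : list nat) : nat -> R :=
  match s with
  | nil => lam
  | i :: s' => play M (fire M i lam) s'
  end.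

Definition convergent_game (n : nat) (M : nat -> nat -> R) (lam : nat -> R)
  (s : list nat) : Prop :=
  legal_play n M lam s /\ (forall j, (j < n)%nat -> play M lam s j <= 0).

Definition admissible (n : nat) (M : nat -> nat -> R) : Prop :=
  exists lam : nat -> R,
    (forall i, (i < n)%nat -> 0 <= lam i) /\
    (exists i, (i < n)%nat /\ lam i <> 0) /\
    exists s, convergent_game n M lam s.

(* Main.v *)
Require Import Defs.
From Stdlib Require Import Reals Lra List Arith Lia.
Open Scope R_scope.

Lemma ln_mono x y : 0 < x -> x <= y -> ln x <= ln y.
Proof.
  intros H1 H2; destruct (Rle_lt_or_eq_dec _ _ H2) as [H|H].
  - left; apply ln_increasing; auto.
  - subst; lra.
Qed.

Lemma exp_mono x y : x <= y -> exp x <= exp y.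
Proof.
  intro H; destruct (Rle_lt_or_eq_dec _ _ H) as [H'|H'].
  - left; apply exp_increasing; exact H'.
  - subst; lra.
Qed.

Lemma amgm u w c : 0 < u -> 0 < w -> 0 < c -> c*c <= u*w -> 2*c <= u+w.
Proof.
  intros Hu Hw Hc H. destruct (Rle_or_lt (2*c) (u+w)) as [H1|H1]; auto.
  assert (0 < (2*c - (u+w)) * (2*c + (u+w))) by (apply Rmult_lt_0_compat; lra).
  pose proof (pow2_ge_0 (u - w)). nra.
Qed.

Lemma key x y Li Lj Lk : 0 < x -> 0 < y -> 2*Li - Lj - Lk <= ln x + ln y ->
  2*exp Li <= x*exp Lj + y*exp Lk.
Proof.
  intros Hx Hy H.
  apply amgm; try apply Rmult_lt_0_compat; try apply exp_pos; auto.
  rewrite <- (exp_ln x) by auto. rewrite <- (exp_ln y) by auto.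
  rewrite <- !exp_plus. apply exp_mono. lra.
Qed.

Lemma prod_ge1 M i j : m_odd M i j -> 1 <= M i j * M j i.
Proof.
  intros [k [[Hk Heq] Hodd]]. rewrite Heq.
  assert (Hk3 : (3 <= k)%nat).
  { destruct Hodd as [q Hq]; lia. }
  assert (H3 : 3 <= INR k) by (replace 3 with (INR 3) by (simpl; lra); apply le_INR; exact Hk3).
  assert (Hpi := PI_RGT_0).
  assert (Hle : PI / INR k <= PI / 3).
  { unfold Rdiv; apply Rmult_le_compat_l; [lra|]. apply Rinv_le_contravar; lra. }
  assert (Hpos : 0 <= PI / INR k).
  { unfold Rdiv; apply Rmult_le_pos; [lra|]. left; apply Rinv_0_lt_compat; lra. }
  assert (Hc : cos (PI/3) <= cos (PI / INR k)).
  { apply cos_decr_1; lra. }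
  rewrite cos_PI3 in Hc. nra.
Qed.

Lemma mono (M : nat -> nat -> R) (c0 c1 c2 : R) :
  (forall i, (i < 3)%nat -> c0 * M i 0%nat + c1 * M i 1%nat + c2 * M i 2%nat <= 0) ->
  forall s lam, legal_play 3 M lam s ->
  c0 * lam 0%nat + c1 * lam 1%nat + c2 * lam 2%nat <=
  c0 * play M lam s 0%nat + c1 * play M lam s 1%nat + c2 * play M lam s 2%nat.
Proof.
  intros Hc s. induction s as [|a s IH]; intros lam Hl; simpl.
  - lra.
  - destruct Hl as [Ha [Hp Hl]].
    specialize (IH _ Hl). unfold fire in IH at 1 2 3.
    specialize (Hc a Ha). nra.
Qed.

Theorem lemma4p15 (M : nat -> nat -> R) :
  EGCM 3 M ->
  (forall i j, (i < 3)%nat -> (j < 3)%nat -> i <> j -> adjacent M i j) ->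
  (forall i j, (i < 3)%nat -> (j < 3)%nat -> i <> j -> m_odd M i j) ->
  ~ admissible 3 M.
Proof.
  intros [Hd [Hn _]] Hadj Hodd [lam [Hnn [[i0 [Hi0 Hnz]] [s [Hl Hend]]]]].
  assert (Hx : forall i j, (i < 3)%nat -> (j < 3)%nat -> i <> j -> 0 < - M i j).
  { intros i j Hi Hj Hij. specialize (Hn i j Hi Hj Hij). specialize (Hadj i j Hi Hj Hij).
    unfold adjacent in Hadj. lra. }
  assert (Hp : forall i j, (i < 3)%nat -> (j < 3)%nat -> i <> j ->
             0 <= ln (- M i j) + ln (- M j i)).
  { intros i j Hi Hj Hij. rewrite <- ln_mult by (apply Hx; auto).
    rewrite <- ln_1. apply ln_mono; [lra|].
    replace (- M i j * - M j i) with (M i j * M j i) by ring.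
    apply prod_ge1, Hodd; auto. }
  set (A := ln (- M 0 1)%nat + ln (- M 0 2)%nat).
  set (B := ln (- M 1 0)%nat + ln (- M 1 2)%nat).
  set (C := ln (- M 2 0)%nat + ln (- M 2 1)%nat).
  assert (HT : 0 <= A + B + C).
  { pose proof (Hp 0%nat 1%nat ltac:(lia) ltac:(lia) ltac:(lia)).
    pose proof (Hp 0%nat 2%nat ltac:(lia) ltac:(lia) ltac:(lia)).
    pose proof (Hp 1%nat 2%nat ltac:(lia) ltac:(lia) ltac:(lia)).
    unfold A, B, C; lra. }
  set (T := A + B + C).
  set (L0 := (2*A + B - T)/3).
  set (L1 := (A + 2*B - T)/3).
  set (L2 := 0).
  assert (Hc : forall i, (i < 3)%nat ->
     exp L0 * M i 0%nat + exp L1 * M i 1%nat + exp L2 * M i 2%nat <= 0).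
  { intros i Hi.
    destruct i as [|[|[|i]]]; [| | |lia]; rewrite Hd by lia.
    - pose proof (key (- M 0 1)%nat (- M 0 2)%nat L0 L1 L2
        (Hx 0%nat 1%nat ltac:(lia) ltac:(lia) ltac:(lia))
        (Hx 0%nat 2%nat ltac:(lia) ltac:(lia) ltac:(lia))
        ltac:(unfold L0, L1, L2, T; fold A; lra)). lra.
    - pose proof (key (- M 1 0)%nat (- M 1 2)%nat L1 L0 L2
        (Hx 1%nat 0%nat ltac:(lia) ltac:(lia) ltac:(lia))
        (Hx 1%nat 2%nat ltac:(lia) ltac:(lia) ltac:(lia))
        ltac:(unfold L0, L1, L2, T; fold B; lra)). lra.
    - pose proof (key (- M 2 0)%nat (- M 2 1)%nat L2 L0 L1
        (Hx 2%nat 0%nat ltac:(lia) ltac:(lia) ltac:(lia))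
        (Hx 2%nat 1%nat ltac:(lia) ltac:(lia) ltac:(lia))
        ltac:(unfold L0, L1, L2, T; fold C; lra)). lra. }
  pose proof (mono M _ _ _ Hc s lam Hl) as Hm.
  pose proof (Hend 0%nat ltac:(lia)). pose proof (Hend 1%nat ltac:(lia)).
  pose proof (Hend 2%nat ltac:(lia)).
  pose proof (exp_pos L0). pose proof (exp_pos L1). pose proof (exp_pos L2).
  assert (Hf : 0 < exp L0 * lam 0%nat + exp L1 * lam 1%nat + exp L2 * lam 2%nat).
  { pose proof (Hnn 0%nat ltac:(lia)). pose proof (Hnn 1%nat ltac:(lia)).
    pose proof (Hnn 2%nat ltac:(lia)).
    assert (0 < lam i0) by (pose proof (Hnn i0 Hi0); lra).
    destruct i0 as [|[|[|i0]]]; [nra|nra|nra|lia]. }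
  nra.
Qed.
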